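(* Let $k\in\mathbb{N}$, let $P$ be the uniform distribution on $[0,1]$ and let $\beta=\{\frac jk:1\leq j\leq k\}$. Then the conditional optimal set of $k$-points for $P$ with respect to $\beta$ is $\beta$ itself, and the $k$th conditional quantization error is $V_k=\frac{k+3}{12k^3}$.
   Context: For a Borel probability measure $P$ on $\mathbb{R}$ and finite $\beta\subset\mathbb{R}$ with $\mathrm{card}(\beta)=r$, for $n\geq r$, $V_n=\inf\{\int\min_{a\in\alpha\cup\beta}(x-a)^2dP(x):\mathrm{card}(\alpha)\leq n-r\}$; a set $\alpha\cup\beta$ attaining the infimum (with each point of $\beta$ having a Voronoi region of positive $P$-measure) is a conditional optimal set of $n$-points with respect to $\beta$. *)

(* Defs.v *)
From HB Require Import structures.
From mathcomp Require Import all_boot all_order all_algebra finmap.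
From mathcomp Require Import all_classical all_reals all_analysis.
Set Implicit Arguments. Unset Strict Implicit. Unset Printing Implicit Defensive.
Import Order.TTheory GRing.Theory Num.Theory.
Local Open Scope classical_set_scope.
Local Open Scope fset_scope.
Local Open Scope ring_scope.

Section CondQuant.
Variable R : realType.

Definition mindist2 (A : {fset R}) (x : R) : \bar R :=
  \big[Order.min/+oo%E]_(a <- A) ((x - a) ^+ 2)%:E.

Definition distortion (P : probability (measurableTypeR R) R) (A : {fset R}) : \bar R :=
  (\int[P]_x mindist2 A x)%E.

Definition cond_quant_error (P : probability (measurableTypeR R) R) (beta : {fset R})
  (n : nat) : \bar R :=
  ereal_inf [set distortion P (alpha `|` beta) |
             alpha in [set alpha : {fset R} | (#|` alpha| <= n - #|` beta|)%N]].

Definition voronoi (A : {fset R}) (a : R) : set (measurableTypeR R) :=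
  [set x | forall b, b \in A -> `|x - a| <= `|x - b|].

Definition cond_optimal_set (P : probability (measurableTypeR R) R) (beta : {fset R})
  (n : nat) (gamma : {fset R}) : Prop :=
  (#|` beta| <= n)%N /\
  exists alpha : {fset R},
    [/\ (#|` alpha| <= n - #|` beta|)%N,
        gamma = alpha `|` beta,
        distortion P gamma = cond_quant_error P beta n &
        forall b, b \in beta -> (0 < P (voronoi gamma b))%E].

End CondQuant.

Definition beta_k (R : realType) (k : nat) : {fset R} :=
  [fset (j%:R / k%:R : R) | j in iota 1 k].

Definition unif01 (R : realType) : probability (measurableTypeR R) R := uniform_prob (@ltr01 R).
Arguments unif01 : clear implicits.
Arguments beta_k : clear implicits.

(* Main.v *)
Require Import Defs.
From HB Require Import structures.
From mathcomp Require Import all_boot all_order all_algebra finmap.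
From mathcomp Require Import all_classical all_reals all_analysis.
From mathcomp Require Import measurable_realfun.
From mathcomp Require Import ring lra zify.
Import Order.TTheory GRing.Theory Num.Theory numFieldNormedType.Exports.
Local Open Scope classical_set_scope.
Local Open Scope fset_scope.
Local Open Scope ring_scope.
Section S.
Variable R : realType.
Variable k : nat.
Hypothesis hk : (0 < k)%N.
Let K : R := k%:R.
Lemma K_gt0 : 0 < K. Proof. by rewrite /K ltr0n. Qed.

Notation bk := (beta_k R k).

Lemma card_bk : #|` bk| = k.
Proof.
rewrite card_imfset /=.
  by rewrite undup_id ?iota_uniq // size_iota.
move=> i j /= /(mulIf (invr_neq0 (lt0r_neq0 K_gt0))) /eqP.
by rewrite eqr_nat => /eqP.
Qed.

Lemma mem_bk b : b \in bk <-> exists2 i : nat, (1 <= i <= k)%N & b = i%:R / K.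
Proof.
split.
  move=> /imfsetP [i /= hi ->]; exists i => //.
  by move: hi; rewrite mem_iota add1n ltnS.
move=> [i hi ->]; apply/imfsetP; exists i => //=.
by rewrite mem_iota add1n ltnS.
Qed.

Lemma bigmin_lb (s : seq R) (F : R -> \bar R) (y : \bar R) :
  (forall b, b \in s -> (y <= F b)%E) -> (y <= \big[Order.min/+oo%E]_(a <- s) F a)%E.
Proof.
elim: s => [|a s IH] h; first by rewrite big_nil leey.
rewrite big_cons le_min h ?mem_head //= IH // => b bs.
by apply: h; rewrite in_cons bs orbT.
Qed.

Lemma bigmin_ub (s : seq R) (F : R -> \bar R) c :
  c \in s -> (\big[Order.min/+oo%E]_(a <- s) F a <= F c)%E.
Proof.
elim: s => [//|a s IH]; rewrite in_cons big_cons ge_min => /orP[/eqP ->|cs].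
  by rewrite lexx.
by rewrite IH ?orbT.
Qed.

Lemma bigmin_val (s : seq R) (x c : R) : c \in s ->
  (forall b, b \in s -> (x - c) ^+ 2 <= (x - b) ^+ 2) ->
  \big[Order.min/+oo%E]_(a <- s) ((x - a) ^+ 2)%:E = ((x - c) ^+ 2)%:E.
Proof.
move=> cs h; apply/le_anti/andP; split; first exact: bigmin_ub.
by apply: bigmin_lb => b /h; rewrite lee_fin.
Qed.

Lemma sq_cmp (x I J : R) :
  (J <= I /\ 2 * K * x <= I + J) \/ (I <= J /\ I + J <= 2 * K * x) ->
  (x - J / K) ^+ 2 <= (x - I / K) ^+ 2.
Proof.
have K0 := K_gt0.
have eJ : x - J / K = (K * x - J) / K by field; exact: lt0r_neq0.
have eI : x - I / K = (K * x - I) / K by field; exact: lt0r_neq0.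
rewrite eJ eI !expr_div_n ler_pM2r ?invr_gt0 ?exprn_gt0 //.
by case=> -[h1 h2]; nra.
Qed.

Lemma cmp_all (j : nat) (x : R) : (1 <= j <= k)%N ->
  (j = 1%N \/ 2 * j%:R - 1 <= 2 * K * x) ->
  (j = k \/ 2 * K * x <= 2 * j%:R + 1) ->
  forall b, b \in bk -> (x - j%:R / K) ^+ 2 <= (x - b) ^+ 2.
Proof.
move=> hj hl hr b /mem_bk [i hi ->].
have [ij|ji|->] := ltngtP i j; last exact: lexx.
- apply: sq_cmp; right.
  case: hl => [j1|hl]; first by move/andP: hi => [? ?]; lia.
  have : (i.+1 <= j)%N := ij.
  rewrite -(ler_nat R) -addn1 natrD => h; split; lra.
- apply: sq_cmp; left.
  case: hr => [jk|hr]; first by move/andP: hi => [? ?]; lia.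
  have : (j.+1 <= i)%N := ji.
  rewrite -(ler_nat R) -addn1 natrD => h; split; lra.
Qed.

Lemma f_eq (j : nat) (x : R) : (1 <= j <= k)%N ->
  (j = 1%N \/ 2 * j%:R - 1 <= 2 * K * x) ->
  (j = k \/ 2 * K * x <= 2 * j%:R + 1) ->
  mindist2 bk x = ((x - j%:R / K) ^+ 2)%:E.
Proof.
move=> hj hl hr; rewrite /mindist2; apply: bigmin_val; last exact: cmp_all.
by apply/mem_bk; exists j.
Qed.

Lemma dsq (p x : R) : derivable (fun y : R => (y - p) ^+ 2) x 1.
Proof. exact: ex_derive. Qed.

Lemma cont_of_derivable (g : R -> R) : (forall x, derivable g x 1) -> continuous g.
Proof.
move=> dg x; apply/differentiable_continuous; rewrite -derivable1_diffP; exact: dg.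
Qed.

Lemma mindist2_ge0 (A : {fset R}) x : (0 <= mindist2 A x)%E.
Proof. by apply: bigmin_lb => b _; rewrite lee_fin sqr_ge0. Qed.

Lemma mindist2_meas (A : {fset R}) : measurable_fun setT (mindist2 A).
Proof.
rewrite /mindist2; elim: (A : seq R) => [|a s IH].
  under eq_fun do rewrite big_nil.
  exact: measurable_cst.
under eq_fun do rewrite big_cons.
apply: measurable_mine => //.
apply/measurable_EFinP; apply: continuous_measurable_fun.
by apply: cont_of_derivable => x; exact: dsq.
Qed.
Notation mu := (@lebesgue_measure R).
Lemma dF (p x : R) : is_derive x 1 (fun y : R => 3^-1 * (y - p) ^+ 3) ((x - p) ^+ 2).
Proof.
apply: is_derive_eq.
by rewrite !subr0 !scaler1 /GRing.scale /=; field.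
Qed.

Lemma piece (g : R -> \bar R) (a b p : R) : a <= b ->
  (forall x, a <= x <= b -> g x = ((x - p) ^+ 2)%:E) ->
  (\int[mu]_(x in `[a, b]) g x = ((3^-1 * (b - p) ^+ 3) - (3^-1 * (a - p) ^+ 3))%:E)%E.
Proof.
rewrite le_eqVlt => /predU1P[<- _|ab hg].
  by rewrite set_itv1 integral_set1 subrr.
have -> : (\int[mu]_(x in `[a, b]) g x = \int[mu]_(x in `[a, b]) ((x - p) ^+ 2)%:E)%E.
  by apply: eq_integral => x; rewrite inE /= in_itv /= => /hg.
have cF : continuous (fun y : R => 3^-1 * (y - p) ^+ 3).
  by apply: cont_of_derivable => x; exact: (@ex_derive _ _ _ x 1 _ _ (dF p x)).
rewrite (@continuous_FTC2 _ _ (fun y : R => 3^-1 * (y - p) ^+ 3)) //.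
- apply: continuous_subspaceT; apply: cont_of_derivable => x; exact: dsq.
- split.
  + by move=> x _; exact: (@ex_derive _ _ _ x 1 _ _ (dF p x)).
  + exact/cvg_at_right_filter/cF.
  + exact/cvg_at_left_filter/cF.
- move=> x _ /=; rewrite derive1E; exact: (@derive_val _ _ _ _ _ _ _ (dF p x)).
Qed.

Lemma split_itv (g : R -> \bar R) (a b c : R) : a <= b -> b <= c ->
  measurable_fun (setT : set R) g ->
  (\int[mu]_(x in `[a, c]) g x = \int[mu]_(x in `[a, b]) g x + \int[mu]_(x in `[b, c]) g x)%E.
Proof.
move=> ab bc mg.
rewrite (@itv_bndbnd_setU _ _ _ (BRight b)) ?bnd_simp //.
rewrite integral_setU //.
- by rewrite integral_itv_obnd_cbnd //; exact: measurable_funTS.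
- exact: measurable_funTS.
- rewrite disj_set2E; apply/eqP/seteqP; split => x //= [].
  by rewrite !in_itv /= => /andP[_ h1] /andP[h2 _]; move: (lt_le_trans h2 h1); rewrite ltxx.
Qed.

Definition t (m : nat) : R := (2 * m%:R + 1) / (2 * K).

Lemma K2_gt0 : 0 < 2 * K. Proof. by rewrite mulr_gt0 ?K_gt0. Qed.

Lemma t_ge0 m : 0 <= t m.
Proof. by rewrite /t divr_ge0 ?addr_ge0 ?mulr_ge0 // ltW // K2_gt0. Qed.

Lemma t_le m : t m <= t m.+1.
Proof. by rewrite /t ler_pM2r ?invr_gt0 ?K2_gt0 // -natr1; lra. Qed.

Lemma S_ind m : (m < k)%N ->
  (\int[mu]_(x in `[0%R, t m]) mindist2 bk x = ((2 * m%:R + 7) / (24 * K ^+ 3))%:E)%E.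
Proof.
have K0 := K_gt0; have K2 := K2_gt0.
elim: m => [_|m IH hm].
  rewrite (@piece _ _ _ (1%:R / K)) ?t_ge0 //.
    by congr (_%:E); rewrite /t; field; rewrite lt0r_neq0.
  move=> x /andP[x0 xt]; apply: f_eq; [by rewrite leqnn hk|by left|right].
  by move: xt; rewrite /t ler_pdivlMr // mulrC; lra.
rewrite (@split_itv _ 0 (t m)) ?t_ge0 ?t_le //; last exact: mindist2_meas.
have e1 := IH (ltn_trans (ltnSn m) hm).
have e2 : (\int[mu]_(x in `[t m, t m.+1]) mindist2 bk x = (1 / (12 * K ^+ 3))%:E)%E.
  rewrite (@piece _ _ _ (m.+1%:R / K)) ?t_le //.
    by congr (_%:E); rewrite /t -!natr1; field; rewrite lt0r_neq0.
  move=> x /andP[x0 xt]; apply: f_eq; first by rewrite (ltnW hm).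
    right; by move: x0; rewrite /t ler_pdivrMr // mulrC -natr1; lra.
  right; by move: xt; rewrite /t ler_pdivlMr // mulrC -!natr1; lra.
rewrite e1 e2 -EFinD; congr (_%:E); rewrite -!natr1; field.
all: by rewrite ?lt0r_neq0.
Qed.

Lemma total_int :
  (\int[mu]_(x in `[0%R, 1%R]) mindist2 bk x = ((K + 3) / (12 * K ^+ 3))%:E)%E.
Proof.
have K0 := K_gt0; have K2 := K2_gt0.
set n := k.-1; have kn : k = n.+1 by rewrite prednK.
have tn1 : t n <= 1.
  by rewrite /t ler_pdivrMr // mul1r /K kn -natr1; lra.
rewrite (@split_itv _ 0 (t n)) ?t_ge0 //; last exact: mindist2_meas.
have hn : (n < k)%N by rewrite kn.
have e1 := @S_ind n hn.
have e2 : (\int[mu]_(x in `[t n, 1%R]) mindist2 bk x = (1 / (24 * K ^+ 3))%:E)%E.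
  rewrite (@piece _ _ _ (k%:R / K)) //.
    congr (_%:E); rewrite /t /K kn -!natr1; field.
    by rewrite natr1 pnatr_eq0.
  move=> x /andP[x0 x1]; apply: f_eq; first by rewrite hk leqnn.
    right; move: x0; rewrite /t ler_pdivrMr // mulrC /K kn -!natr1; lra.
  by left.
rewrite e1 e2 -EFinD; congr (_%:E); rewrite /K kn -!natr1; field.
by rewrite natr1 pnatr_eq0.
Qed.

Lemma meas_vor_seq (s : seq R) (a : R) :
  measurable [set x : R | forall b, b \in s -> `|x - a| <= `|x - b|].
Proof.
elim: s => [|b s IH].
  rewrite (_ : [set x : R | _] = setT) //.
  by apply/seteqP; split => x //= _ b.
rewrite (_ : [set x : R | _] = ([set x : R | `|x - a| <= `|x - b|] `&`
   [set x : R | forall b, b \in s -> `|x - a| <= `|x - b|])%classic).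
  apply: measurableI => //.
  have := @measurable_lee _ R R setT measurableT (fun x => (`|x - a|)%:E) (fun x => (`|x - b|)%:E).
  rewrite setTI.
  have mf c : measurable_fun setT (fun x : R => (`|x - c|)%:E).
    apply/measurable_EFinP; apply: measurableT_comp => //.
    exact: measurable_funB.
  move=> /(_ (mf a) (mf b)).
  suff -> : [set x : R | `|x - a| <= `|x - b|] = [set x | (`|x - a|%:E <= `|x - b|%:E)%E] by [].
  by apply/seteqP; split => x /=; rewrite lee_fin.
apply/seteqP; split => x /=.
  by move=> h; split; [apply: h; rewrite mem_head|move=> c cs; apply: h; rewrite in_cons cs orbT].
by move=> [h1 h2] c; rewrite in_cons => /orP[/eqP ->//|/h2].
Qed.

Lemma vor_pos b : b \in bk -> (0 < unif01 R (voronoi bk b))%E.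
Proof.
have K0 := K_gt0; have K2 := K2_gt0.
move=> /mem_bk [j hj ->].
move/andP: (hj) => [j1 jk].
have J1 : 1 <= j%:R :> R by rewrite ler1n.
have JK : j%:R <= K :> R by rewrite /K ler_nat.
set lo := (2 * j%:R - 1) / (2 * K); set hi := j%:R / K.
have lohi : lo < hi.
  have e : j%:R / K * (2 * K) = 2 * j%:R by field; exact: lt0r_neq0.
  by rewrite /lo /hi ltr_pdivrMr // e; lra.
have lo0 : 0 <= lo by rewrite /lo divr_ge0 //; lra.
have hi1 : hi <= 1 by rewrite /hi ler_pdivrMr // mul1r.
have sub : (`[lo, hi] `<=` voronoi bk (j%:R / K))%classic.
  move=> x /=; rewrite in_itv /= => /andP[xl xh] c hc.
  have hl : 2 * j%:R - 1 <= 2 * K * x by move: xl; rewrite /lo ler_pdivrMr // => h; nra.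
  have hr : 2 * K * x <= 2 * j%:R + 1.
    by move: xh; rewrite /hi ler_pdivlMr // => h; nra.
  have := @cmp_all j x hj (or_intror hl) (or_intror hr) c hc.
  by rewrite -(real_normK (num_real (x - _))) -(real_normK (num_real (x - c))) ler_sqr ?nnegrE.
apply: (lt_le_trans _ (le_measure (unif01 R) _ _ sub)).
- rewrite /unif01 /= /uniform_prob.
  rewrite (_ : (\int[mu]_(x in `[lo, hi]) (uniform_pdf 0 1 x)%:E)%E =
               (\int[mu]_(x in `[lo, hi]) (cst 1%E x))%E); last first.
    apply: eq_integral => x; rewrite inE /= in_itv /= => /andP[xl xh].
    rewrite /uniform_pdf ifT ?subr0 ?invr1 //.
    by apply/andP; split; [apply: le_trans xl|apply: le_trans hi1].
  rewrite integral_cst ?mul1e; last exact: measurable_itv.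
  have h := lebesgue_measure_itv `[lo, hi]; rewrite /= lte_fin lohi -EFinB in h.
  have h2 : (0%R < lebesgue_measure `[lo, hi]%classic)%E by rewrite h lte_fin subr_gt0.
  exact: h2.
- by rewrite inE; exact: measurable_itv.
- by rewrite inE; exact: meas_vor_seq.
Qed.

Lemma dist_val : distortion (unif01 R) bk = ((K + 3) / (12 * K ^+ 3))%:E.
Proof.
rewrite /distortion /unif01 integral_uniform //=.
- by rewrite subr0 invr1 mul1e; exact: total_int.
- exact: mindist2_meas.
- exact: mindist2_ge0.
Qed.

Lemma card0_fset0 (A : {fset R}) : (#|` A| <= 0)%N -> A = fset0.
Proof. by rewrite leqn0 cardfs_eq0 => /eqP. Qed.

Lemma cqe : cond_quant_error (unif01 R) bk k = distortion (unif01 R) bk.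
Proof.
rewrite /cond_quant_error card_bk subnn.
rewrite (_ : [set distortion (unif01 R) (alpha `|` bk)%fset | alpha in
   [set alpha : {fset R} | (#|` alpha| <= 0)%N]]%classic = [set distortion (unif01 R) bk]%classic).
  by rewrite ereal_inf1.
apply/seteqP; split => y /=.
  by move=> [alpha /card0_fset0 -> <-]; rewrite fset0U.
by move=> ->; exists fset0; [rewrite cardfs0|rewrite fset0U].
Qed.
End S.

Theorem proposition4p1 (R : realType) (k : nat) : (0 < k)%N ->
  (forall gamma : {fset R},
     cond_optimal_set (unif01 R) (beta_k R k) k gamma <-> gamma = beta_k R k)
  /\ cond_quant_error (unif01 R) (beta_k R k) k
     = ((k%:R + 3) / (12 * k%:R ^+ 3))%:E.
Proof.
move=> hk; split; last by rewrite cqe // dist_val.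
move=> gamma; split.
  case=> _ [alpha [ha -> _ _]].
  by move: ha; rewrite card_bk // subnn => /card0_fset0 ->; rewrite fset0U.
move=> ->; split; first by rewrite card_bk.
exists fset0; split.
- by rewrite cardfs0.
- by rewrite fset0U.
- by rewrite cqe.
- by move=> b hb; exact: vor_pos.
Qed.
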